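(* Let $(R,\mathfrak{m},k)$ be a Noetherian local ring with $\mathfrak{m}^2=0$, and let $M$ be a finitely generated $R$-module with no nonzero free direct summand. Then $\lim_{n\to\infty}\frac{\ell(M^{n\ast})}{\operatorname{type}(R)^n}=\beta_0(M)$.
   Context: $M^\ast=\operatorname{Hom}_R(M,R)$ and $M^{n\ast}$ denotes the $n$-fold iterated dual ($M^{0\ast}=M$). $\ell(-)$ is length, $\operatorname{type}(R)=\dim_k\operatorname{Hom}_R(k,R)$, and $\beta_0(M)=\dim_k(M\otimes_R k)$ is the minimal number of generators of $M$. *)

(* Defs.v *)
From HB Require Import structures.
From mathcomp Require Import all_boot all_order all_algebra.
From mathcomp Require Import boolp classical_sets.
Set Implicit Arguments. Unset Strict Implicit. Unset Printing Implicit Defensive.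
Import GRing.Theory.
Local Open Scope ring_scope.
Local Open Scope classical_set_scope.

Section Dual.
Variables (R : comUnitRingType) (M : lmodType R).

Record dualT := Dual {
  dfun :> M -> R ;
  dlin : forall (a : R) (u v : M), dfun (a *: u + v) = a * dfun u + dfun v }.

HB.instance Definition _ := gen_eqMixin dualT.
HB.instance Definition _ := gen_choiceMixin dualT.

Lemma dual_ext (f g : dualT) : (forall x, f x = g x) -> f = g.
Proof.
case: f g => f fl [g gl] /= fg; have efg : f = g by apply: funext.
by subst g; rewrite (Prop_irrelevance fl gl).
Qed.

Program Definition dzero : dualT := @Dual (fun _ => 0) _.
Next Obligation. by rewrite mulr0 addr0. Qed.
Program Definition dadd (f g : dualT) : dualT := @Dual (fun x => f x + g x) _.
Next Obligation. by rewrite !dlin mulrDr addrACA. Qed.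
Program Definition dopp (f : dualT) : dualT := @Dual (fun x => - f x) _.
Next Obligation. by rewrite dlin opprD mulrN. Qed.
Program Definition dscale (a : R) (f : dualT) : dualT := @Dual (fun x => a * f x) _.
Next Obligation. by rewrite dlin mulrDr mulrCA. Qed.

Lemma daddA : associative dadd.
Proof. by move=> f g h; apply: dual_ext => x /=; rewrite addrA. Qed.
Lemma daddC : commutative dadd.
Proof. by move=> f g; apply: dual_ext => x /=; rewrite addrC. Qed.
Lemma dadd0 : left_id dzero dadd.
Proof. by move=> f; apply: dual_ext => x /=; rewrite add0r. Qed.
Lemma daddN : left_inverse dzero dopp dadd.
Proof. by move=> f; apply: dual_ext => x /=; rewrite addNr. Qed.

HB.instance Definition _ := GRing.isZmodule.Build dualT daddA daddC dadd0 daddN.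

Lemma dscaleA a b (f : dualT) : dscale a (dscale b f) = dscale (a * b) f.
Proof. by apply: dual_ext => x /=; rewrite mulrA. Qed.
Lemma dscale1 : left_id 1 dscale.
Proof. by move=> f; apply: dual_ext => x /=; rewrite mul1r. Qed.
Lemma dscaleDr : right_distributive dscale +%R.
Proof. by move=> a f g; apply: dual_ext => x /=; rewrite mulrDr. Qed.
Lemma dscaleDl (f : dualT) : {morph dscale^~ f : a b / a + b}.
Proof. by move=> a b; apply: dual_ext => x /=; rewrite mulrDl. Qed.

HB.instance Definition _ :=
  GRing.Zmodule_isLmodule.Build R dualT dscaleA dscale1 dscaleDr dscaleDl.

End Dual.

Definition dual (R : comUnitRingType) (M : lmodType R) : lmodType R := dualT M.

Fixpoint ndual (R : comUnitRingType) (n : nat) (M : lmodType R) : lmodType R :=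
  match n with 0%N => M | n'.+1 => dual (ndual n' M) end.

Section Modules.
Variable R : comUnitRingType.

Definition submodule (M : lmodType R) (S : set M) : Prop :=
  S 0 /\ forall (a : R) (u v : M), S u -> S v -> S (a *: u + v).

Definition has_chain (M : lmodType R) (A : set M) (n : nat) : Prop :=
  exists c : nat -> set M,
    (forall i, (i <= n)%N -> submodule (c i) /\ c i `<=` A) /\
    (forall i, (i < n)%N -> c i `<` c i.+1).

Definition is_length (M : lmodType R) (A : set M) (l : nat) : Prop :=
  has_chain A l /\ forall n, has_chain A n -> (n <= l)%N.

(* length of (the submodule) A; junk value 0 if A has infinite length *)
Definition modlength (M : lmodType R) (A : set M) : nat :=
  xget 0%N [set l | is_length A l].

Definition length (M : lmodType R) : nat := modlength [set: M].

Definition generates (M : lmodType R) (n : nat) (v : 'I_n -> M) : Prop :=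
  forall x : M, exists r : 'I_n -> R, x = \sum_(i < n) r i *: v i.

Definition fin_gen (M : lmodType R) : Prop :=
  exists n (v : 'I_n -> M), generates v.

Definition beta0 (M : lmodType R) : nat :=
  xget 0%N [set n | (exists v : 'I_n -> M, generates v) /\
                    forall m, (exists w : 'I_m -> M, generates w) -> (n <= m)%N].

Definition free_sub (M : lmodType R) (N : set M) : Prop :=
  submodule N /\
  exists n (b : 'I_n -> M), (forall i, N (b i)) /\
    forall x, N x -> exists! r : 'I_n -> R, x = \sum_(i < n) r i *: b i.

Definition has_nonzero_free_summand (M : lmodType R) : Prop :=
  exists N P : set M,
    submodule N /\ submodule P /\
    (forall x, exists! yz : M * M, [/\ N yz.1, P yz.2 & x = yz.1 + yz.2]) /\
    N `&` P = [set 0] /\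
    free_sub N /\ N <> [set 0].

End Modules.

Section Rings.
Variable R : comUnitRingType.

Definition maxideal : set R := [set x | x \isn't a GRing.unit].

(* local: the non-units form an (the unique maximal) ideal *)
Definition local_ring : Prop :=
  forall x y : R, maxideal x -> maxideal y -> maxideal (x + y).

Definition noetherian_ring : Prop :=
  forall I : set R^o, submodule I ->
    exists n (v : 'I_n -> R),
      (forall i, I (v i)) /\
      forall x, I x -> exists r : 'I_n -> R, x = \sum_(i < n) r i * v i.

Definition maxideal_sq_zero : Prop :=
  forall x y : R, maxideal x -> maxideal y -> x * y = 0.

(* Hom_R(k, R), realised (universal property of k = R/m) as the
   R-linear maps R -> R vanishing on m *)
Definition hom_res_R : set (dual R^o) :=
  [set f | forall x : R, maxideal x -> f x = 0].

(* type(R) = dim_k Hom_R(k,R) = l_R(Hom_R(k,R)) (m kills Hom_R(k,R)) *)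
Definition ring_type : nat := modlength hom_res_R.

End Rings.

(* Main.v *)
Require Import Defs.
Set Warnings "-all".
From HB Require Import structures.
From mathcomp Require Import all_boot all_order all_algebra.
From mathcomp Require Import all_classical all_reals all_analysis.
From mathcomp Require Import Rstruct Rstruct_topology.
Import GRing.Theory Num.Theory.
Local Open Scope classical_set_scope.
Local Open Scope ring_scope.
Section Gen.
Variable R : comUnitRingType.
Local Notation m := (@maxideal R).

Lemma m0 : m 0. Proof. by rewrite /maxideal /= unitr0. Qed.
Lemma m1 : ~ m 1. Proof. by rewrite /maxideal /= unitr1. Qed.
Lemma mM x y : m y -> m (x * y).
Proof. by rewrite /maxideal /= unitrM => /negbTE ->; rewrite andbF. Qed.
Lemma mN x : m x -> m (- x).
Proof. by rewrite /maxideal /= unitrN. Qed.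

Section Sub.
Variable V : lmodType R.
Variable A : set V.
Hypothesis hA : submodule A.
Lemma sub0 : A 0. Proof. by case: hA. Qed.
Lemma subD u v : A u -> A v -> A (u + v).
Proof. by move=> hu hv; have := hA.2 1 u v hu hv; rewrite scale1r. Qed.
Lemma subZ a u : A u -> A (a *: u).
Proof. by move=> hu; have := hA.2 a u 0 hu sub0; rewrite addr0. Qed.
Lemma subN u : A u -> A (- u).
Proof. by move=> hu; rewrite -scaleN1r; apply: subZ. Qed.
Lemma subB u v : A u -> A v -> A (u - v).
Proof. by move=> hu hv; apply: subD => //; apply: subN. Qed.
Lemma sub_sum (J : finType) (P : pred J) (F : J -> V) :
  (forall j, A (F j)) -> A (\sum_(j | P j) F j).
Proof. by move=> hF; apply: (big_ind A) => //; [exact: sub0| exact: subD]. Qed.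
End Sub.

Lemma subI (V : lmodType R) (A B : set V) :
  submodule A -> submodule B -> submodule (A `&` B).
Proof.
move=> hA hB; split; first by split; apply: sub0.
by move=> a u v [? ?] [? ?]; split; [apply: hA.2 | apply: hB.2].
Qed.

Lemma subT (V : lmodType R) : submodule [set: V].
Proof. by []. Qed.

Section DualL.
Variable V : lmodType R.
Variable f : dual V.
Lemma dual0 : f 0 = 0.
Proof.
have := Defs.dlin f 1 0 0; rewrite scaler0 addr0 mul1r => h.
by apply: (addrI (f 0)); rewrite addr0 -h.
Qed.
Lemma dualD u v : f (u + v) = f u + f v.
Proof. by rewrite -{1}[u]scale1r Defs.dlin mul1r. Qed.
Lemma dualZ a u : f (a *: u) = a * f u.
Proof. by rewrite -[a *: u]addr0 Defs.dlin dual0 addr0. Qed.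
Lemma dual_sum (J : finType) (P : pred J) (F : J -> V) :
  f (\sum_(j | P j) F j) = \sum_(j | P j) f (F j).
Proof. exact: (big_morph f dualD dual0). Qed.
End DualL.

Lemma dual_sumE (V : lmodType R) (J : finType) (P : pred J) (F : J -> dual V) x :
  (\sum_(j | P j) F j) x = \sum_(j | P j) F j x.
Proof.
exact: (big_morph (fun f : dual V => f x) (id1 := 0) (op1 := +%R)).
Qed.
Lemma dual_scaleE (V : lmodType R) (a : R) (f : dual V) x : (a *: f) x = a * f x.
Proof. by []. Qed.
Lemma dual_addE (V : lmodType R) (f g : dual V) x : (f + g) x = f x + g x.
Proof. by []. Qed.
Lemma dual_zeroE (V : lmodType R) x : (0 : dual V) x = 0.
Proof. by []. Qed.

End Gen.
Section Len.
Variable R : comUnitRingType.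
Local Notation m := (@maxideal R).
Variables (V : lmodType R) (I : finType) (w : I -> V).
Hypothesis Hk : forall i a, m a -> a *: w i = 0.

Definition span (S : {set I}) : set V :=
  [set x | exists r : I -> R, x = \sum_(i in S) r i *: w i].

Lemma span_sub S : submodule (span S).
Proof.
split.
  by exists (fun=> 0); rewrite big1 // => i _; rewrite scale0r.
move=> a u v [ru ->] [rv ->]; exists (fun i => a * ru i + rv i).
rewrite scaler_sumr -big_split; apply: eq_bigr => i _.
by rewrite scalerDl scalerA.
Qed.

Lemma span_decomp (S : {set I}) i0 x : i0 \in S -> span S x ->
  exists r y, span (S :\ i0) y /\ x = y + r *: w i0.
Proof.
move=> hi [r ->]; exists (r i0), (\sum_(i in S :\ i0) r i *: w i); split.
  by exists r.
rewrite (bigD1 i0) //= addrC; congr (_ + _); apply: eq_bigl => i.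
by rewrite in_setD1 andbC.
Qed.

Lemma span_mono (S1 S2 : {set I}) : S1 \subset S2 -> span S1 `<=` span S2.
Proof.
move=> sub x [r ->]; exists (fun i => if i \in S1 then r i else 0).
rewrite big_mkcond [RHS]big_mkcond; apply: eq_bigr => i _.
case: ifP => h1; last by case: ifP => //; rewrite scale0r.
by rewrite (fintype.subsetP sub _ h1).
Qed.

Lemma span0 x : span finset.set0 x -> x = 0.
Proof. by move=> [r ->]; rewrite big_set0. Qed.

Lemma key_step (S : {set I}) i0 (X Y : set V) : i0 \in S ->
  submodule X -> submodule Y -> Y `<=` span S ->
  X `<` Y -> ~ (X `<=` span (S :\ i0)) ->
  (X `&` span (S :\ i0)) `<` (Y `&` span (S :\ i0)).
Proof.
set W := span (S :\ i0) => hi hX hY hYS [XY nYX] nXW.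
split; first by move=> z [? ?]; split => //; apply: XY.
move=> H; apply: nYX.
have [x [Xx nWx]] : exists x, X x /\ ~ W x.
  apply: contrapT => nex; apply: nXW => x Xx; apply: contrapT => nW.
  by apply: nex; exists x.
have [r [wx [Wx ex]]] := span_decomp _ _ _ hi (hYS _ (XY _ Xx)).
have ur : r \is a GRing.unit.
  apply: contrapT => /negP nu; apply: nWx.
  by rewrite ex Hk // addr0.
move=> y Yy.
have [r' [wy [Wy ey]]] := span_decomp _ _ _ hi (hYS _ Yy).
set z := y - (r' / r) *: x.
have Yz : Y z by apply: subB => //; apply: subZ => //; apply: XY.
have Wz : W z.
  have -> : z = wy - (r' / r) *: wx.
    rewrite /z ey ex scalerDr scalerA divrK // opprD addrACA subrr addr0.
    by [].
  by apply: subB; [exact: span_sub | | apply: subZ => //; exact: span_sub].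
have [Xz _] := H z (conj Yz Wz).
have -> : y = z + (r' / r) *: x by rewrite /z subrK.
by apply: subD => //; apply: subZ.
Qed.

Lemma upper k : forall S : {set I}, #|S| = k -> forall n (c : nat -> set V),
  (forall i, (i <= n)%N -> submodule (c i) /\ c i `<=` span S) ->
  (forall i, (i < n)%N -> c i `<` c i.+1) -> (n <= k)%N.
Proof.
elim: k => [|k IH] S hS n c hc hlt.
  move/eqP: hS; rewrite cards_eq0 => /eqP S0; subst S.
  case: n hc hlt => // n hc hlt; exfalso.
  have [_ nsub] := hlt 0%N isT; apply: nsub => y y1.
  have [hc1 s1] := hc 1%N isT; have [hc0 _] := hc 0%N isT.
  by rewrite (span0 _ (s1 _ y1)); apply: sub0.
have [S0|[i0 hi0]] := set_0Vmem S; first by rewrite S0 cards0 in hS.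
set W := span (S :\ i0).
have hS' : #|S :\ i0| = k by move: hS; rewrite (cardsD1 i0) hi0 add1n => -[].
case: n hc hlt => // n hc hlt.
pose d i := if pselect (c i.+1 `<=` W) is left _ then c i else c i.+1 `&` W.
suff : (n <= k)%N by [].
apply: (IH (S :\ i0) hS' n d).
  move=> i hi; rewrite /d; case: pselect => h1.
    have [hci _] := hc i (leqW hi); split => //.
    by move=> z /(proj1 (hlt i hi)) /h1.
  have [hci _] := hc i.+1 hi; split; last by move=> z [].
  by apply: subI => //; exact: span_sub.
move=> i hi; rewrite /d.
have [hc1 s1] := hc i.+1 (ltnW hi); have [hc2 s2] := hc i.+2 hi.
case: pselect => h1; case: pselect => h2.
- by apply: hlt; apply: ltnW.
- have [c01 nc10] := hlt i (ltnW hi).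
  have c12 : c i.+1 `<=` c i.+2 `&` W.
    by move=> z z1; split; [apply: (proj1 (hlt i.+1 hi)) | apply: h1].
  split; first by move=> z /c01 /c12.
  by move=> H; apply: nc10 => z /c12 /H.
- by exfalso; apply: h1 => z /(proj1 (hlt i.+1 hi)) /h2.
- by apply: key_step => //; apply: hlt.
Qed.

Hypothesis Hind : forall r : I -> R, \sum_i r i *: w i = 0 -> forall i, m (r i).

Lemma w_span (S : {set I}) i : i \in S -> span S (w i).
Proof.
move=> hi; exists (fun j => if j == i then 1 else 0).
rewrite (bigD1 i) //= eqxx scale1r big1 ?addr0 // => j /andP[_ /negbTE ->].
by rewrite scale0r.
Qed.

Lemma w_nspan (S : {set I}) i : ~ span (S :\ i) (w i).
Proof.
move=> [r er].
pose r' j := if j == i then -1 else if j \in S :\ i then r j else 0.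
have := Hind r'; rewrite (bigD1 i) //= /r' eqxx scaleN1r.
have -> : \sum_(j | j != i) (if j == i then -1 else
     if j \in S :\ i then r j else 0) *: w j = \sum_(j in S :\ i) r j *: w j.
  rewrite big_mkcond [RHS]big_mkcond; apply: eq_bigr => j _.
  case: eqP => [->|_] /=; first by rewrite setD11.
  by case: ifP => //; rewrite scale0r.
by rewrite -er addNr => /(_ erefl i); rewrite eqxx => /mN; rewrite opprK; exact: m1.
Qed.

Lemma lower k : forall S : {set I}, #|S| = k -> has_chain (span S) k.
Proof.
elim: k => [|k IH] S hS.
  exists (fun=> span S); split => // i _; split => //; exact: span_sub.
have [S0|[i0 hi0]] := set_0Vmem S; first by rewrite S0 cards0 in hS.
have hS' : #|S :\ i0| = k by move: hS; rewrite (cardsD1 i0) hi0 add1n => -[].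
have [c [hc hlt]] := IH _ hS'.
have sub' : span (S :\ i0) `<=` span S by apply: span_mono; apply: subsetDl.
exists (fun i => if i == k.+1 then span S else c i); split.
  move=> i hi; case: eqP => [_|ne]; first by split; [exact: span_sub|].
  have hik : (i <= k)%N.
    by move: hi; rewrite leq_eqVlt => /orP[/eqP e|//]; exfalso.
  by have [hci sci] := hc i hik; split => // z /sci /sub'.
move=> i hi; rewrite (ltn_eqF hi) eqSS; case: eqP => [->|ne].
  have [_ sck] := hc k (leqnn k); split; first by move=> z /sck /sub'.
  by move=> H; apply: (w_nspan S i0); apply: sck; apply: H; apply: w_span.
apply: hlt; move: hi; rewrite ltnS leq_eqVlt => /orP[/eqP e|//]; by [].
Qed.

Lemma len_basis (A : set V) : submodule A -> (forall i, A (w i)) ->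
  (forall x, A x -> exists r : I -> R, x = \sum_i r i *: w i) ->
  modlength A = #|I|.
Proof.
move=> hA hw hsp.
have spA : span (finset.setT : {set I}) `<=` A.
  by move=> x [r ->]; apply: sub_sum => // i; apply: subZ.
have Asp : A `<=` span (finset.setT : {set I}).
  move=> x /hsp [r ->]; exists r; apply: eq_bigl => i; by rewrite inE.
have ch : has_chain A #|I|.
  have [c [hc hlt]] := @lower _ _ (cardsT I); exists c; split => // j hj.
  by have [? sc] := hc j hj; split => // z /sc /spA.
have up : forall n, has_chain A n -> (n <= #|I|)%N.
  move=> n [c [hc hlt]]; apply: (@upper _ _ (cardsT I) n c _ hlt) => j hj.
  by have [? sc] := hc j hj; split => // z /sc /Asp.
apply: xget_unique; first by split.
by move=> l [chl upl]; apply/eqP; rewrite eqn_leq up // upl.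
Qed.
End Len.
Section Step.
Variable R : comUnitRingType.
Local Notation m := (@maxideal R).

Definition gen (V : lmodType R) (A : set V) n (v : 'I_n -> V) :=
  (forall i, A (v i)) /\
  forall x, A x -> exists r : 'I_n -> R, x = \sum_(i < n) r i *: v i.
Definition indep (V : lmodType R) (I : finType) (v : I -> V) :=
  forall r : I -> R, \sum_i r i *: v i = 0 -> forall i, m (r i).
Arguments indep {V I}.
Arguments gen {V}.

Lemma mingen (V : lmodType R) (A : set V) : (exists n v, @gen V A n v) ->
  exists n v, [/\ @gen V A n v,
     (forall n' v', @gen V A n' v' -> (n <= n')%N) & indep v].
Proof.
move=> ex.
have exP : exists n, `[< exists v, @gen V A n v >].
  by case: ex => n [v h]; exists n; apply/asboolP; exists v.
case: (ex_minnP exP) => n /asboolP [v hv] hmin.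
exists n, v; split => //.
  by move=> n' v' h'; apply: hmin; apply/asboolP; exists v'.
move=> r hr j; apply/negP.
case: n v hv hmin r hr j => [|n] v hv hmin r hr j; first by case: j.
move=> uj.
have : (n.+1 <= n)%N; last by rewrite ltnn.
apply: hmin; apply/asboolP; exists (fun k => v (lift j k)); split.
  by move=> k; apply: hv.1.
move=> x /hv.2 [c ->].
move: hr; rewrite (bigD1_ord j) //= => hr.
set T := \sum_(k < n) r (lift j k) *: v (lift j k) in hr.
have e1 : r j *: v j = - T by apply/eqP; rewrite -addr_eq0; apply/eqP.
have vj : v j = - ((r j)^-1 *: T).
  by rewrite -[v j]scale1r -(mulVr uj) -scalerA e1 scalerN.
exists (fun k => c (lift j k) - c j * (r j)^-1 * r (lift j k)).
rewrite (bigD1_ord j) //= vj.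
rewrite [RHS](eq_bigr (fun k => c (lift j k) *: v (lift j k) -
   (c j * (r j)^-1) *: (r (lift j k) *: v (lift j k)))); last first.
  by move=> k _; rewrite scalerBl scalerA.
by rewrite sumrB -scaler_sumr addrC scalerN scalerA.
Qed.

Section StepV.
Variables (V : lmodType R) (I : finType) (u : I -> V).
Hypothesis Hgen : forall x : V, exists r : I -> R, x = \sum_i r i *: u i.
Hypothesis Hind : indep u.

Definition coef x : I -> R := proj1_sig (cid (Hgen x)).
Lemma coefE x : x = \sum_i coef x i *: u i.
Proof. exact: (proj2_sig (cid (Hgen x))). Qed.

Lemma coef_lin a x y i : m (coef (a *: x + y) i - (a * coef x i + coef y i)).
Proof.
apply: (Hind (fun i => coef (a *: x + y) i - (a * coef x i + coef y i))).
rewrite (eq_bigr (fun i => coef (a *: x + y) i *: u i -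
   (a *: (coef x i *: u i) + coef y i *: u i))); last first.
  by move=> k _; rewrite scalerBl scalerDl scalerA.
by rewrite sumrB big_split /= -scaler_sumr -!coefE subrr.
Qed.

Lemma coef_u l i : m (coef (u l) i - (i == l)%:R).
Proof.
apply: (Hind (fun i => coef (u l) i - (i == l)%:R)).
rewrite (eq_bigr (fun i => coef (u l) i *: u i - (i == l)%:R *: u i)); last first.
  by move=> k _; rewrite scalerBl.
rewrite sumrB -coefE (bigD1 l) //= eqxx scale1r big1 ?addr0 ?subrr //.
by move=> k /negbTE ->; rewrite scale0r.
Qed.

Lemma cf_lin i t (Ht : forall a, m a -> a * t = 0) (a : R) (x y : V) :
  coef (a *: x + y) i * t = a * (coef x i * t) + coef y i * t.
Proof.
have := Ht _ (coef_lin a x y i); rewrite mulrBl => /eqP; rewrite subr_eq0 => /eqP ->.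
by rewrite mulrDl mulrA.
Qed.

Definition cf i t (Ht : forall a, m a -> a * t = 0) : dual V :=
  @Dual R V (fun x => coef x i * t) (@cf_lin i t Ht).

Lemma cfE i t Ht x : @cf i t Ht x = coef x i * t.
Proof. by []. Qed.

Lemma cf_u i t Ht l : @cf i t Ht (u l) = (i == l)%:R * t.
Proof.
have := Ht _ (coef_u l i); rewrite mulrBl => /eqP; rewrite subr_eq0 => /eqP.
by rewrite cfE.
Qed.

Hypothesis Hval : forall (f : dual V) x, m (f x).

Lemma field_case (hm : forall a, m a -> a = 0) : I -> False.
Proof.
move=> i0.
have Ht : forall a, m a -> a * 1 = 0 by move=> a /hm ->; rewrite mul0r.
have := Hval (@cf i0 1 Ht) (u i0); rewrite cf_u eqxx mul1r; exact: m1.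
Qed.

Hypothesis mq : maxideal_sq_zero R.
Variables (J : finType) (s : J -> R).
Hypothesis Hs_m : forall j, m (s j).
Hypothesis Hs_span : forall a, m a -> exists c : J -> R, a = \sum_j c j * s j.
Hypothesis Hs_ind : forall c : J -> R, \sum_j c j * s j = 0 -> forall j, m (c j).

Lemma Hts j : forall a, m a -> a * s j = 0.
Proof. by move=> a ha; apply: mq. Qed.

Definition bw (p : I * J) : dual V := @cf p.1 (s p.2) (@Hts p.2).

Lemma step_gen (f : dual V) : exists r : I * J -> R, f = \sum_p r p *: bw p.
Proof.
have [a ha] : exists a : I -> J -> R, forall i, f (u i) = \sum_j a i j * s j.
  exists (fun i => proj1_sig (cid (Hs_span _ (Hval f (u i))))) => i.
  exact: (proj2_sig (cid (Hs_span _ (Hval f (u i))))).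
exists (fun p => a p.1 p.2); apply: dual_ext => x.
rewrite dual_sumE {1}(coefE x) dual_sum.
rewrite (eq_bigr (fun p => a p.1 p.2 * (coef x p.1 * s p.2))); last by [].
rewrite -(pair_bigA _ (fun i j => a i j * (coef x i * s j))) /=.
apply: eq_bigr => i _; rewrite dualZ ha mulr_sumr; apply: eq_bigr => j _.
by rewrite mulrCA.
Qed.

Lemma step_killed p a : m a -> a *: bw p = 0.
Proof.
move=> ha; apply: dual_ext => x.
by rewrite dual_scaleE /bw cfE mulrCA Hts // mulr0.
Qed.

Lemma step_ind : indep bw.
Proof.
move=> r hr [l j].
have := congr1 (fun f : dual V => f (u l)) hr; rewrite /= dual_sumE.
rewrite (eq_bigr (fun p => r (p.1, p.2) * ((p.1 == l)%:R * s p.2))); last first.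
  by case=> i k _; rewrite dual_scaleE /bw cf_u.
rewrite -(pair_bigA _ (fun i j => r (i, j) * ((i == l)%:R * s j))) /=.
have z : forall i, i != l ->
    \sum_j r (i, j) * ((i == l)%:R * s j) = 0.
  by move=> i /negbTE hi; apply: big1 => k _; rewrite hi mul0r mulr0.
rewrite (bigD1 l) //= [X in _ + X]big1 ?addr0; last exact: z.
rewrite (eq_bigr (fun k => r (l, k) * s k)); last by move=> k _; rewrite eqxx mul1r.
by move/(Hs_ind (fun k => r (l, k))).
Qed.

End StepV.
End Step.
Section Main.
Variable R : comUnitRingType.
Local Notation m := (@maxideal R).

Lemma nofree_val (M : lmodType R) : ~ has_nonzero_free_summand M ->
  forall (f : dual M) x, m (f x).
Proof.
move=> nf f x; apply/negP => ux; apply: nf.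
set x' := (f x)^-1 *: x.
have fx' : f x' = 1 by rewrite dualZ mulVr.
clearbody x'.
have hN : submodule [set y : M | exists a, y = a *: x'].
  split; first by exists 0; rewrite scale0r.
  by move=> a u v [b ->] [c ->]; exists (a * b + c); rewrite scalerDl scalerA.
have hP : submodule [set y : M | f y = 0].
  split; first exact: dual0.
  by move=> a u v /= hu hv; rewrite Defs.dlin hu hv mulr0 addr0.
exists [set y : M | exists a, y = a *: x'], [set y : M | f y = 0].
split; first exact: hN.
split; first exact: hP.
split.
  move=> y; exists (f y *: x', y - f y *: x'); split.
    split => /=; [by exists (f y) | | by rewrite addrC subrK].
    by rewrite dualD -scaleNr dualZ fx' mulr1 subrr.
  move=> [y1 y2] [/= [a ->] h2 ey].
  have fa : f y = a by rewrite ey dualD dualZ fx' h2 mulr1 addr0.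
  by rewrite fa ey [a *: x' + y2]addrC addrK.
split.
  apply/seteqP; split => y /=.
    by move=> [[a ->] h]; move: h; rewrite dualZ fx' mulr1 => ->; rewrite scale0r.
  by move=> ->; split; [exists 0; rewrite scale0r | exact: dual0].
split.
  split; first exact: hN.
  exists 1%N, (fun _ => x'); split; first by move=> i; exists 1; rewrite scale1r.
  move=> y [a ->]; exists (fun _ => a); split; first by rewrite big_ord1.
  move=> r' e; apply: funext => i; rewrite (ord1 i).
  have := congr1 f e; rewrite big_ord1 !dualZ fx' !mulr1 => ->.
  by [].
move=> e.
have : [set y : M | exists a, y = a *: x'] x' by exists 1; rewrite scale1r.
rewrite e /= => x0; move: fx'; rewrite x0 dual0 => /eqP; rewrite eq_sym oner_eq0.
by [].
Qed.

Lemma killed_span (V : lmodType R) (I : finType) (w : I -> V)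
  (hk : forall i a, m a -> a *: w i = 0) a (r : I -> R) :
  m a -> a *: \sum_i r i *: w i = 0.
Proof.
move=> ha; rewrite scaler_sumr big1 // => i _.
by rewrite scalerA mulrC -scalerA hk // scaler0.
Qed.

Lemma g_lin (t : R) (a : R) (x y : R^o) :
  (a *: x + y) * t = a * (x * t) + y * t.
Proof. by rewrite mulrDl mulrA. Qed.

Definition gdual (t : R) : dual R^o := @Dual R R^o (fun x => x * t) (@g_lin t).

Lemma type_eq (mq : maxideal_sq_zero R) (J : finType) (s : J -> R)
  (Hs_m : forall j, m (s j))
  (Hs_span : forall a, m a -> exists c : J -> R, a = \sum_j c j * s j)
  (Hs_ind : forall c : J -> R, \sum_j c j * s j = 0 -> forall j, m (c j))
  a0 : m a0 -> a0 != 0 -> ring_type R = #|J|.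
Proof.
move=> ha0 nz.
have e1 : forall x : R, x *: (1 : R^o) = x := fun x => mulr1 x.
apply: (@len_basis R (dual R^o) J (fun j => gdual (s j))).
- move=> j a ha; apply: dual_ext => x.
  by rewrite dual_scaleE /= mulrCA (mq _ _ ha (Hs_m j)) mulr0.
- move=> r hr j.
  have := congr1 (fun f : dual R^o => f 1) hr; rewrite /= dual_sumE.
  rewrite (eq_bigr (fun j => r j * s j)); last by move=> k _; rewrite /= mul1r.
  by move/Hs_ind.
- split; first by [].
  by move=> a f g hf hg x hx; rewrite /= hf // hg // mulr0 addr0.
- by move=> j x hx; rewrite /= (mq _ _ hx (Hs_m j)).
- move=> f hf.
  have mf1 : m (f 1).
    apply/negP => u1; move/negP: nz; apply.
    have : a0 * f 1 = 0 * f 1 by rewrite -dualZ e1 hf // mul0r.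
    by move/(mulIr u1) => ->.
  have [c hc] := Hs_span _ mf1; exists c; apply: dual_ext => x.
  rewrite dual_sumE -[in LHS](e1 x) dualZ hc mulr_sumr.
  by apply: eq_bigr => j _; rewrite dual_scaleE /= mulrCA.
Qed.

End Main.
Theorem proposition5p9 (R : comUnitRingType) (M : lmodType R) :
  local_ring R -> noetherian_ring R -> maxideal_sq_zero R ->
  fin_gen M -> ~ has_nonzero_free_summand M ->
  (fun n : nat => ((length (ndual n M))%:R / (ring_type R)%:R ^+ n
                    : Rdefinitions.R))
    @ \oo --> ((beta0 M)%:R : Rdefinitions.R).
Proof.
move=> loc noeth mq fg nf.
have msub : submodule (@maxideal R : set R^o).
  split; first exact: m0.
  by move=> a u v hu hv; apply: loc => //; apply: mM.
have [ne [ve [hve1 hve2]]] := noeth _ msub.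
have [e [s [[Hs_m Hs_span] _ Hs_ind]]] :=
  @mingen R R^o (@maxideal R) (ex_intro _ ne (ex_intro _ ve (conj hve1 hve2))).
have [b [u [[_ Hgen'] hmin Hind]]] : exists n v, [/\ @gen R M setT n v,
     (forall n' v', @gen R M setT n' v' -> (n <= n')%N) & @indep R M _ v].
  apply: mingen; case: fg => n [v hv]; exists n, v; split => // x _; exact: hv.
have Hgen : forall x : M, exists r, x = \sum_i r i *: u i by move=> x; exact: Hgen'.
have HvalM := @nofree_val R M nf.
have beq : beta0 M = b.
  rewrite /beta0; apply: xget_unique.
    split; first by exists u.
    by move=> k [w hw]; apply: (hmin k w); split => // x _; exact: hw.
  move=> y [[w hw] hy]; apply/eqP; rewrite eqn_leq hy; last by exists u.
  by rewrite (hmin y w) //; split => // x _; exact: hw.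
have Hs_span2 : forall a, @maxideal R a ->
    exists c : 'I_e -> R, a = \sum_j c j * s j by exact: Hs_span.
have Hs_ind2 : forall c : 'I_e -> R, \sum_j c j * s j = 0 ->
    forall j, @maxideal R (c j) by exact: Hs_ind.
have claim : forall n, exists (I : finType) (w : I -> ndual n.+1 M),
  [/\ forall x, exists r : I -> R, x = \sum_i r i *: w i,
      forall i a, @maxideal R a -> a *: w i = 0,
      @indep R (ndual n.+1 M) I w & #|I| = (b * e ^ n.+1)%N].
  elim=> [|n [I [w [wg wk wi wc]]]].
    exists ('I_b * 'I_e)%type, (@bw R M _ u Hgen Hind mq _ s Hs_m); split.
    - move=> f; exact: (@step_gen R M _ u Hgen Hind HvalM mq _ s Hs_m Hs_span2 f).
    - move=> p a ha; exact: (@step_killed R M _ u Hgen Hind mq _ s Hs_m p a ha).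
    - exact: (@step_ind R M _ u Hgen Hind mq _ s Hs_m Hs_ind2).
    - by rewrite card_prod !card_ord expn1.
  have Hval : forall (g : dual (ndual n.+1 M)) x, @maxideal R (g x).
    move=> g x; apply/negP => ux.
    have hm : forall a, @maxideal R a -> a = 0.
      move=> a ha; have [r er] := wg x.
      have : a * g x = 0 * g x.
        by rewrite -dualZ er (@killed_span R _ _ _ wk a r ha) dual0 mul0r.
      by move/(mulIr ux).
    have e0 : e = 0%N.
      case: (posnP e) => [//|ep]; exfalso.
      apply: (@m1 R); apply: (Hs_ind2 (fun _ => 1) _ (Ordinal ep)).
      by apply: big1 => k _; rewrite (hm _ (Hs_m k)) mulr0.
    have I0 : #|I| = 0%N by rewrite wc e0 exp0n // muln0.
    have [r er] := wg x; move: ux; rewrite er big_pred0 ?dual0 ?unitr0 //.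
    by move=> i; have := card0_eq I0 i; rewrite !inE.
  exists (I * 'I_e)%type, (@bw R _ I w wg wi mq _ s Hs_m); split.
  - move=> f; exact: (@step_gen R _ _ w wg wi Hval mq _ s Hs_m Hs_span2 f).
  - move=> p a ha; exact: (@step_killed R _ _ w wg wi mq _ s Hs_m p a ha).
  - exact: (@step_ind R _ _ w wg wi mq _ s Hs_m Hs_ind2).
  - by rewrite card_prod card_ord wc [in RHS]expnSr mulnA.
have len : forall n, length (ndual n.+1 M) = (b * e ^ n.+1)%N.
  move=> n; have [I [w [wg wk wi wc]]] := claim n; rewrite /length -wc.
  by apply: (@len_basis R _ I w wk wi) => // x _; exact: wg.
case: (pselect (exists a0, @maxideal R a0 /\ a0 != 0)) => [[a0 [ha0 nz]]|nex].
  have ep : (0 < e)%N.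
    case: (posnP e) => // e0; exfalso; have [c hc] := Hs_span2 _ ha0.
    subst e; move: nz; rewrite hc big1 ?eqxx // => -[i hi].
    by have := hi; rewrite ltn0.
  have te : ring_type R = e.
    by rewrite (@type_eq R mq _ s Hs_m Hs_span2 Hs_ind2 a0 ha0 nz) card_ord.
  rewrite beq; apply: cvg_near_cst; exists 1%N => // n hn /=.
  case: n hn => // n _; rewrite len te natrM natrX mulfK //.
  by rewrite expf_neq0 // pnatr_eq0 -lt0n.
have hm : forall a, @maxideal R a -> a = 0.
  move=> a ha; apply: contrapT => na; apply: nex; exists a; split => //.
  by apply/eqP.
have b0 : b = 0%N.
  case: (posnP b) => // bp; exfalso.
  exact: (@field_case R M _ u Hgen Hind HvalM hm (Ordinal bp)).
rewrite beq b0; apply: cvg_near_cst; exists 1%N => // n hn.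
by case: n hn => // n _; rewrite /= len b0 mul0n mul0r.
Qed.
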